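(* Let $\mathbf{u}$ be a Sturmian word with parameters $(\ell_0,\ell_1,\rho)$ which is fixed by a primitive morphism $\varphi_w$, $w\in\{a,b,\alpha,\beta\}^*$. (1) If $w \in \{b,\beta\}^*$, then $\rho = \ell_1$. (2) If $w \in \{b,\alpha\}^*$, then $\rho = 0$. (3) If $w \in \{a,\beta\}^*$, then $\rho = \ell_0+\ell_1$. (4) If $w \in \{a,\alpha\}^*$, then $\rho = \ell_0$.
   Context: Morphisms on $\{0,1\}^*$: $\varphi_a: 0\mapsto 0, 1 \mapsto 10$; $\varphi_b: 0 \mapsto 0, 1\mapsto 01$; $\varphi_\alpha: 0\mapsto 01, 1\mapsto 1$; $\varphi_\beta: 0\mapsto 10, 1 \mapsto 1$; for $w=w_0\cdots w_{m-1}$, $\varphi_w = \varphi_{w_0}\circ\cdots\circ\varphi_{w_{m-1}}$. A morphism is primitive if some power maps every letter to a word containing every letter. Two interval exchange words: given $\ell_0,\ell_1>0$, take either $I=[0,\ell_0+\ell_1)$, $I_0=[0,\ell_0)$, $I_1=[\ell_0,\ell_0+\ell_1)$ (lower case) or $I=(0,\ell_0+\ell_1]$, $I_0=(0,\ell_0]$, $I_1=(\ell_0,\ell_0+\ell_1]$ (upper case); $T(x)=x+\ell_1$ on $I_0$, $T(x)=x-\ell_0$ on $I_1$; for $\rho\in I$, $u_n = 0$ if $T^n(\rho)\in I_0$ and $u_n=1$ otherwise. With $\ell_1/(\ell_0+\ell_1)$ irrational these are the Sturmian words; ''Sturmian word with parameters $(\ell_0,\ell_1,\rho)$'' means such a lower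 or upper coding. *)

(* Defs.v *)
From mathcomp Require Import all_boot all_order all_algebra.
From mathcomp Require Import reals.
Set Implicit Arguments. Unset Strict Implicit. Unset Printing Implicit Defensive.
Import Order.TTheory GRing.Theory Num.Theory.
Local Open Scope ring_scope.

(* Letters of the alphabet 0 = false, 1 = true. *)
Inductive mletter := La | Lb | Lalpha | Lbeta.

Definition phil (l : mletter) (c : bool) : seq bool :=
  match l, c with
  | La, false => [:: false]          | La, true => [:: true; false]
  | Lb, false => [:: false]          | Lb, true => [:: false; true]
  | Lalpha, false => [:: false; true] | Lalpha, true => [:: true]
  | Lbeta, false => [:: true; false]  | Lbeta, true => [:: true]
  end.

Definition mapw (f : bool -> seq bool) (s : seq bool) : seq bool :=
  flatten (map f s).

Definition phiw (w : seq mletter) (c : bool) : seq bool :=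
  foldr (fun l s => mapw (phil l) s) [:: c] w.

Definition primitive (f : bool -> seq bool) : Prop :=
  exists k : nat, forall c d : bool, d \in iter k (mapw f) [:: c].

(* The infinite word u is fixed by f: f(u) = u, i.e. for every n the image of
   the prefix of length n of u is a prefix of u (f is nonerasing here). *)
Definition fixed_by (f : bool -> seq bool) (u : nat -> bool) : Prop :=
  forall n i : nat, (i < size (mapw f (mkseq u n)))%N ->
    nth false (mapw f (mkseq u n)) i = u i.

Definition irrational {R : realType} (x : R) : Prop :=
  forall p q : int, q != 0 -> x * q%:~R != p%:~R.

(* Lower-case exchange: I = [0, l0+l1), I_0 = [0, l0). *)
Definition T_low {R : realType} (l0 l1 x : R) : R :=
  if x < l0 then x + l1 else x - l0.
(* Upper-case exchange: I = (0, l0+l1], I_0 = (0, l0]. *)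
Definition T_up {R : realType} (l0 l1 x : R) : R :=
  if x <= l0 then x + l1 else x - l0.

Definition lower_coding {R : realType} (l0 l1 rho : R) (n : nat) : bool :=
  ~~ (iter n (T_low l0 l1) rho < l0).
Definition upper_coding {R : realType} (l0 l1 rho : R) (n : nat) : bool :=
  ~~ (iter n (T_up l0 l1) rho <= l0).

Definition sturmian {R : realType} (l0 l1 rho : R) (u : nat -> bool) : Prop :=
  0 < l0 /\ 0 < l1 /\ irrational (l1 / (l0 + l1)) /\
  ((0 <= rho /\ rho < l0 + l1 /\ forall n, u n = lower_coding l0 l1 rho n) \/
   (0 < rho /\ rho <= l0 + l1 /\ forall n, u n = upper_coding l0 l1 rho n)).

Definition in_b_beta (l : mletter) : bool :=
  match l with Lb | Lbeta => true | _ => false end.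
Definition in_b_alpha (l : mletter) : bool :=
  match l with Lb | Lalpha => true | _ => false end.
Definition in_a_beta (l : mletter) : bool :=
  match l with La | Lbeta => true | _ => false end.
Definition in_a_alpha (l : mletter) : bool :=
  match l with La | Lalpha => true | _ => false end.

(* Main.v *)
Require Import Defs.
From mathcomp Require Import all_boot all_order all_algebra.
From mathcomp Require Import reals.
From mathcomp Require Import zify ring lra.
Unset Printing Implicit Defensive.
Import Order.TTheory GRing.Theory Num.Theory.
Local Open Scope ring_scope.

Section S.
Variable R : realType.

Definition flr (t : bool) (z : R) (k : nat) : Prop :=
  if t then (k%:R < z /\ z <= k%:R + 1) else (k%:R <= z /\ z < k%:R + 1).

Lemma flr_div t (z d : R) k : 0 < d ->
  (if t then (k%:R * d < z /\ z <= k%:R * d + d) else (k%:R * d <= z /\ z < k%:R * d + d)) ->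
  flr t (z / d) k.
Proof.
move=> d0; rewrite /flr; case: t => -[h1 h2]; split.
- by rewrite ltr_pdivlMr.
- by rewrite ler_pdivrMr // mulrDl mul1r.
- by rewrite ler_pdivlMr.
- by rewrite ltr_pdivrMr // mulrDl mul1r.
Qed.

Definition A (l : mletter) (a : R) : R :=
  match l with La | Lb => a / (1 + a) | _ => 1 / (2 - a) end.
Definition X (l : mletter) (a x : R) : R :=
  match l with La => (x + a) / (1 + a) | Lb => x / (1 + a)
  | Lalpha => x / (2 - a) | Lbeta => (x + 1 - a) / (2 - a) end.

Lemma main_step l t (a x : R) (Z S : nat) : 0 < a < 1 ->
  flr t ((Z + S)%:R * a + x) S ->
  flr t ((Z * size (phil l false) + S * size (phil l true))%:R * A l a + X l a x)
        (Z * count id (phil l false) + S * count id (phil l true)).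
Proof.
move=> /andP[a0 a1].
have d1 : 0 < 1 + a by lra.
have d2 : 0 < 2 - a by lra.
have n1 : 1 + a != 0 by rewrite gt_eqF.
have n2 : 2 - a != 0 by rewrite gt_eqF.
case: l => /=; rewrite ?muln1 ?muln0 ?addn0 ?add0n.
- have E : forall N : R, N * (a/(1+a)) + (x+a)/(1+a) = (N*a+x+a)/(1+a).
    by move=> N; field.
  rewrite E => h; apply: flr_div => //; move: h.
  rewrite /flr !natrD !natrM /=; case: t; lra.
- have E : forall N : R, N * (a/(1+a)) + x/(1+a) = (N*a+x)/(1+a).
    by move=> N; field.
  rewrite E => h; apply: flr_div => //; move: h.
  rewrite /flr !natrD !natrM /=; case: t; lra.
- have E : forall N : R, N * (1/(2-a)) + x/(2-a) = (N+x)/(2-a).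
    by move=> N; field.
  rewrite E => h; apply: flr_div => //; move: h.
  rewrite /flr !natrD !natrM /=; case: t; lra.
- have E : forall N : R, N * (1/(2-a)) + (x+1-a)/(2-a) = (N+x+1-a)/(2-a).
    by move=> N; field.
  rewrite E => h; apply: flr_div => //; move: h.
  rewrite /flr !natrD !natrM /=; case: t; lra.
Qed.

Lemma mid_step l t (a x : R) (Z S : nat) (c : bool) : 0 < a < 1 ->
  size (phil l c) = 2%N ->
  flr t ((Z + S)%:R * a + x) S ->
  flr t ((Z + S).+1%:R * a + x) (S + c) ->
  flr t ((Z * size (phil l false) + S * size (phil l true)).+1%:R * A l a + X l a x)
        (Z * count id (phil l false) + S * count id (phil l true) + nth false (phil l c) 0).
Proof.
move=> /andP[a0 a1].
have d1 : 0 < 1 + a by lra.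
have d2 : 0 < 2 - a by lra.
have n1 : 1 + a != 0 by rewrite gt_eqF.
have n2 : 2 - a != 0 by rewrite gt_eqF.
case: l; case: c => //= _; rewrite ?muln1 ?muln0 ?addn0 ?add0n.
- have E : forall N : R, N * (a/(1+a)) + (x+a)/(1+a) = (N*a+x+a)/(1+a).
    by move=> N; field.
  rewrite E => h h'; apply: flr_div => //; move: h h'.
  rewrite /flr -!natr1 !natrD !natrM /=; case: t; lra.
- have E : forall N : R, N * (a/(1+a)) + x/(1+a) = (N*a+x)/(1+a).
    by move=> N; field.
  rewrite E => h h'; apply: flr_div => //; move: h h'.
  rewrite /flr -!natr1 !natrD !natrM /=; case: t; lra.
- have E : forall N : R, N * (1/(2-a)) + x/(2-a) = (N+x)/(2-a).
    by move=> N; field.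
  rewrite E => h h'; apply: flr_div => //; move: h h'.
  rewrite /flr -!natr1 !natrD !natrM /=; case: t; lra.
- have E : forall N : R, N * (1/(2-a)) + (x+1-a)/(2-a) = (N+x+1-a)/(2-a).
    by move=> N; field.
  rewrite E => h h'; apply: flr_div => //; move: h h'.
  rewrite /flr -!natr1 !natrD !natrM /=; case: t; lra.
Qed.

Definition FMech t (a x : R) (p : seq bool) :=
  forall k, (k <= size p)%N -> flr t (k%:R * a + x) (count id (take k p)).

Lemma mapw_cat f s1 s2 : mapw f (s1 ++ s2) = mapw f s1 ++ mapw f s2.
Proof. by rewrite /mapw map_cat flatten_cat. Qed.

Lemma mapw_rcons f s c : mapw f (rcons s c) = mapw f s ++ f c.
Proof. by rewrite -cats1 mapw_cat /mapw /= cats0. Qed.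

Lemma size_mapw f s : size (mapw f s) =
  (count negb s * size (f false) + count id s * size (f true))%N.
Proof.
elim: s => [|c s IH] //=; rewrite /mapw /= size_cat -/(mapw f s) IH.
case: c => /=; lia.
Qed.

Lemma count_mapw f s : count id (mapw f s) =
  (count negb s * count id (f false) + count id s * count id (f true))%N.
Proof.
elim: s => [|c s IH] //=; rewrite /mapw /= count_cat -/(mapw f s) IH.
case: c => /=; lia.
Qed.

Lemma size_cnt s : size s = (count negb s + count id s)%N.
Proof. by elim: s => [|c s IH] //=; case: c => /=; lia. Qed.

Lemma FMech_step l t a x p : 0 < a < 1 -> FMech t a x p ->
  FMech t (A l a) (X l a x) (mapw (phil l) p).
Proof.
move=> ha; elim/last_ind: p => [|q c IH] H.
  move=> k; rewrite leqn0 => /eqP -> /=.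
  have := main_step l t a x 0 0 ha.
  rewrite /= !mul0n !addn0; apply.
  by have := H 0%N (leqnn _); rewrite /= mul0r.
have Hq : FMech t a x q.
  move=> k hk; have := H k; rewrite size_rcons -cats1 takel_cat //.
  by apply; apply: leq_trans hk _.
have {}IH := IH Hq.
move=> k; rewrite mapw_rcons size_cat => hk.
have hsz : (1 <= size (phil l c) <= 2)%N by clear; case: l; case: c.
set s1 := mapw (phil l) q.
have [hk1|hk1] := leqP k (size s1).
  by rewrite takel_cat //; apply: IH.
have [hk2|hk2] : k = (size s1 + size (phil l c))%N \/
    (k = (size s1).+1 /\ size (phil l c) = 2%N).
  by move: hk hk1 hsz; rewrite /s1; lia.
- rewrite hk2 /s1 -size_cat -(mapw_rcons (phil l) q c) take_size.
  rewrite size_mapw count_mapw.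
  have := H (size (rcons q c)) (leqnn _).
  rewrite take_size (size_cnt (rcons q c)) => h.
  exact: main_step.
- case: hk2 => -> h2.
  rewrite take_cat (_ : ((size s1).+1 < size s1)%N = false); last by lia.
  rewrite subSnn count_cat.
  have -> : count id (take 1 (phil l c)) = nth false (phil l c) 0.
    by move: h2; case: (phil l c) => [|d [|e [|f r]]] //= _; rewrite addn0.
  rewrite /s1 size_mapw count_mapw.
  apply: mid_step => //.
  + have := H (size q); rewrite size_rcons -cats1 takel_cat // take_size.
    by rewrite -size_cnt; apply.
  + have := H (size (rcons q c)) (leqnn _).
    by rewrite take_size size_rcons -cats1 count_cat /= addn0 -size_cnt.
Qed.

Fixpoint Aw (w : seq mletter) (a : R) : R :=
  if w is l :: w' then A l (Aw w' a) else a.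
Fixpoint Xw (w : seq mletter) (a x : R) : R :=
  if w is l :: w' then X l (Aw w' a) (Xw w' a x) else x.

Lemma A_range l a : 0 < a < 1 -> 0 < A l a < 1.
Proof.
move=> /andP[a0 a1]; apply/andP; case: l => /=; split.
- by apply: divr_gt0; lra.
- by rewrite ltr_pdivrMr; lra.
- by apply: divr_gt0; lra.
- by rewrite ltr_pdivrMr; lra.
- by apply: divr_gt0; lra.
- by rewrite ltr_pdivrMr; lra.
- by apply: divr_gt0; lra.
- by rewrite ltr_pdivrMr; lra.
Qed.

Lemma Aw_range w a : 0 < a < 1 -> 0 < Aw w a < 1.
Proof. by move=> ha; elim: w => [|l w IH] //=; apply: A_range. Qed.

Lemma mapw_phiw l w s : mapw (phiw (l :: w)) s = mapw (phil l) (mapw (phiw w) s).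
Proof.
elim: s => [|c s IH] //=.
by rewrite /mapw /= -!/(mapw _ _) IH mapw_cat.
Qed.

Lemma FMech_w w t a x p : 0 < a < 1 -> FMech t a x p ->
  FMech t (Aw w a) (Xw w a x) (mapw (phiw w) p).
Proof.
move=> ha H; elim: w => [|l w IH] /=.
  by rewrite /mapw /phiw /= flatten_seq1.
rewrite mapw_phiw; apply: FMech_step => //; exact: Aw_range.
Qed.


Definition cnt (u : nat -> bool) n := count id (mkseq u n).
Definition Mech t (a x : R) (u : nat -> bool) :=
  forall n, flr t (n%:R * a + x) (cnt u n).

Lemma cntS u n : cnt u n.+1 = (cnt u n + u n)%N.
Proof. by rewrite /cnt mkseqS -cats1 count_cat /= addn0. Qed.

Lemma take_mkseq' (u : nat -> bool) k m : (k <= m)%N -> take k (mkseq u m) = mkseq u k.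
Proof.
move=> km; apply: (@eq_from_nth _ false).
  by rewrite size_takel ?size_mkseq.
move=> i; rewrite size_takel ?size_mkseq // => ik.
by rewrite nth_take // !nth_mkseq //; apply: leq_trans ik km.
Qed.

Lemma Mech_FMech t a x u m : Mech t a x u -> FMech t a x (mkseq u m).
Proof.
move=> H k; rewrite size_mkseq => km; rewrite take_mkseq' //; exact: H.
Qed.

Lemma size_mapw_ge f s : (forall c, 0 < size (f c))%N -> (size s <= size (mapw f s))%N.
Proof.
move=> hf; rewrite size_mapw {1}size_cnt.
have h0 := hf false; have h1 := hf true.
by apply: leq_add; rewrite leq_pmulr.
Qed.

Lemma size_phiw w c : (0 < size (phiw w c))%N.
Proof.
elim: w => [|l w IH] //=.
apply: leq_trans IH _; apply: size_mapw_ge; by case: l; case.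
Qed.

Lemma fixed_Mech w t a x u : fixed_by (phiw w) u ->
  (forall m, FMech t a x (mapw (phiw w) (mkseq u m))) -> Mech t a x u.
Proof.
move=> hfix H n.
set q := mapw (phiw w) (mkseq u n).
have hn : (n <= size q)%N.
  by rewrite -{1}(size_mkseq u n); apply: size_mapw_ge => c; apply: size_phiw.
have := H n n hn; rewrite -/q.
have -> : take n q = mkseq u n.
  apply: (@eq_from_nth _ false); first by rewrite size_takel ?size_mkseq.
  move=> i; rewrite size_takel // => ik.
  rewrite nth_take // nth_mkseq // hfix //; apply: leq_trans ik hn.
by [].
Qed.

Lemma low_iter (l0 l1 rho : R) u : 0 < l0 -> 0 < l1 -> 0 <= rho -> rho < l0 + l1 ->
  (forall n, u n = lower_coding l0 l1 rho n) ->
  forall n, iter n (T_low l0 l1) rho = rho + n%:R * l1 - (cnt u n)%:R * (l0 + l1) /\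
     0 <= iter n (T_low l0 l1) rho < l0 + l1.
Proof.
move=> h0 h1 r0 r1 hu; elim=> [|n [IH1 /andP[IH2 IH3]]].
  rewrite /= /cnt /= !mul0r addr0 subr0; split => //; apply/andP; split => //.
rewrite iterS cntS hu /lower_coding -/(iter n (T_low l0 l1) rho).
rewrite /T_low; case: ifP => hz /=; rewrite ?addn0 ?addn1 -?natr1 ?natrD; split; try apply/andP; try split; try lra.
Qed.

Lemma up_iter (l0 l1 rho : R) u : 0 < l0 -> 0 < l1 -> 0 < rho -> rho <= l0 + l1 ->
  (forall n, u n = upper_coding l0 l1 rho n) ->
  forall n, iter n (T_up l0 l1) rho = rho + n%:R * l1 - (cnt u n)%:R * (l0 + l1) /\
     0 < iter n (T_up l0 l1) rho <= l0 + l1.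
Proof.
move=> h0 h1 r0 r1 hu; elim=> [|n [IH1 /andP[IH2 IH3]]].
  rewrite /= /cnt /= !mul0r addr0 subr0; split => //; apply/andP; split => //.
rewrite iterS cntS hu /upper_coding -/(iter n (T_up l0 l1) rho).
rewrite /T_up; case: ifP => hz /=; rewrite ?addn0 ?addn1 -?natr1 ?natrD; split; try apply/andP; try split; try lra.
Qed.

Lemma sturm_Mech (l0 l1 rho : R) u : sturmian l0 l1 rho u ->
  exists t, Mech t (l1 / (l0 + l1)) (rho / (l0 + l1)) u.
Proof.
move=> [h0 [h1 [_ [[r0 [r1 hu]]|[r0 [r1 hu]]]]]].
- exists false => n; have [e /andP[z0 z1]] := low_iter l0 l1 rho u h0 h1 r0 r1 hu n.
  have L0 : 0 < l0 + l1 by lra.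
  have -> : n%:R * (l1 / (l0 + l1)) + rho / (l0 + l1) = (n%:R * l1 + rho) / (l0 + l1).
    by rewrite mulrA -mulrDl.
  apply: flr_div => //=; lra.
- exists true => n; have [e /andP[z0 z1]] := up_iter l0 l1 rho u h0 h1 r0 r1 hu n.
  have L0 : 0 < l0 + l1 by lra.
  have -> : n%:R * (l1 / (l0 + l1)) + rho / (l0 + l1) = (n%:R * l1 + rho) / (l0 + l1).
    by rewrite mulrA -mulrDl.
  apply: flr_div => //=; lra.
Qed.

Lemma flr_weak t z k : flr t z k -> k%:R <= z <= k%:R + 1.
Proof. by rewrite /flr; case: t => -[h1 h2]; apply/andP; split; lra. Qed.

Lemma U1' t t' a a' x x' u : Mech t a x u -> Mech t' a' x' u -> a < a' -> False.
Proof.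
move=> H H' aa.
pose n := (Num.truncn ((x - x' + 1) / (a' - a))).+1.
have hn : (x - x' + 1) / (a' - a) < n%:R by apply: Num.Theory.truncnS_gt.
have d0 : 0 < a' - a by lra.
move: hn; rewrite ltr_pdivrMr // => hn.
have /andP[h1 h2] := flr_weak _ _ _ (H n).
have /andP[h3 h4] := flr_weak _ _ _ (H' n).
lra.
Qed.

Arguments U1' {t t' a a' x x' u}.

Lemma U1 t t' a a' x x' u : Mech t a x u -> Mech t' a' x' u -> a = a'.
Proof.
move=> H H'; case: (ltgtP a a') => // h.
- by case: (U1' H H' h).
- by case: (U1' H' H h).
Qed.


Lemma step_real (lo hi g : R) : lo < hi -> g != 0 -> - (hi - lo) < g < hi - lo ->
  exists K : nat, exists k0 : int, lo < k0%:~R + K%:R * g < hi.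
Proof.
move=> lh g0 /andP[g1 g2].
case: (ltgtP g 0) => hg; last by move: g0; rewrite hg eqxx.
- pose k0 := (Num.floor hi + 1)%R.
  have hk0 : hi < k0%:~R by rewrite /k0; apply: floorD1_gt.
  have hk1 : k0%:~R <= hi + 1 by rewrite /k0 intrD; have := floor_le hi; lra.
  pose T := Num.truncn ((k0%:~R - hi) / (- g)).
  have ng : 0 < - g by lra.
  have hT1 : T%:R <= (k0%:~R - hi) / (- g).
    by rewrite truncn_le; apply: divr_ge0; lra.
  have hT2 : (k0%:~R - hi) / (- g) < T.+1%:R by apply: truncnS_gt.
  move: hT1 hT2; rewrite ler_pdivlMr // ltr_pdivrMr // -natr1 => hT1 hT2.
  exists T.+1, k0; rewrite -natr1; apply/andP; split; lra.
- pose k0 := Num.floor lo.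
  have hk0 : k0%:~R <= lo by apply: floor_le.
  pose T := Num.truncn ((lo - k0%:~R) / g).
  have hT1 : T%:R <= (lo - k0%:~R) / g.
    by rewrite truncn_le; apply: divr_ge0; lra.
  have hT2 : (lo - k0%:~R) / g < T.+1%:R by apply: truncnS_gt.
  move: hT1 hT2; rewrite ler_pdivlMr // ltr_pdivrMr // -natr1 => hT1 hT2.
  exists T.+1, k0; rewrite -natr1; apply/andP; split; lra.
Qed.


Lemma dens (a : R) : Defs.irrational a -> forall lo hi : R, lo < hi ->
  exists n : nat, exists k : int, lo < k%:~R - n%:R * a < hi.
Proof.
move=> ha lo hi lh; move: ha; rewrite /Defs.irrational => ha.
pose e := hi - lo.
have e0 : 0 < e by rewrite /e; lra.
pose M := Num.truncn (1 / e).
have hN : 1 < M.+1%:R * e.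
  by rewrite -ltr_pdivrMr //; apply: truncnS_gt.
pose v (i : nat) : R := i%:R * a - (Num.floor (i%:R * a))%:~R.
have v01 i : 0 <= v i < 1.
  have := floor_le (i%:R * a); have := floorD1_gt (i%:R * a).
  rewrite intrD /v => h1 h2; apply/andP; split; lra.
have N0 : (0 : R) < M.+1%:R by rewrite ltr0n.
have Nv i : 0 <= M.+1%:R * v i < M.+1%:R.
  have /andP[h1 h2] := v01 i; apply/andP; split.
  - by apply: mulr_ge0; lra.
  - by rewrite -[X in _ < X]mulr1 ltr_pM2l.
pose g (i : 'I_M.+2) : 'I_M.+1 := inord (Num.truncn (M.+1%:R * v i)).
have gK i : nat_of_ord (g i) = Num.truncn (M.+1%:R * v i).
  rewrite /g inordK //; have /andP[h1 h2] := Nv i.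
  by rewrite truncn_lt_nat.
have [i [j [nij gij]]] : exists i j : 'I_M.+2, i != j /\ g i = g j.
  case: (boolP [exists i, exists j, (i != j) && (g i == g j)]).
    move=> /existsP[i /existsP[j /andP[h1 /eqP h2]]]; by exists i, j.
  move=> hn; have inj : injective g.
    move=> i j e'; apply/eqP; apply: contraNT hn => ne.
    by apply/existsP; exists i; apply/existsP; exists j; rewrite ne e' eqxx.
  by have := leq_card g inj; rewrite !card_ord ltnn.
have close : forall i j : 'I_M.+2, g i = g j -> - e < v j - v i < e.
  move=> i0 j0 /(congr1 (@nat_of_ord _)); rewrite !gK => eT.
  have /andP[h1 _] := Nv i0; have /andP[h2 _] := Nv j0.
  have := truncn_itv h1; have := truncn_itv h2.
  rewrite eT => /andP[h3 h4] /andP[h5 h6].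
  have h7 : M.+1%:R * (v j0 - v i0) < M.+1%:R * e by rewrite mulrBr; lra.
  have h8 : M.+1%:R * (- e) < M.+1%:R * (v j0 - v i0) by rewrite mulrBr mulrN; lra.
  by rewrite ltr_pM2l // in h7; rewrite ltr_pM2l // in h8; apply/andP; split.
have [i0 [j0 [ij hc]]] : exists i0 j0 : nat, (i0 < j0)%N /\ - e < v j0 - v i0 < e.
  have hv : val i != val j by [].
  case: (ltngtP (val i) (val j)) => h.
  - by exists (val i), (val j); split => //; apply: close.
  - exists (val j), (val i); split => //.
    have /andP[h1 h2] := close _ _ gij; apply/andP; split; lra.
  - by move: hv; rewrite h eqxx.
pose d := (j0 - i0)%N.
pose m := (Num.floor (j0%:R * a) - Num.floor (i0%:R * a))%R.
pose gm := m%:~R - d%:R * a.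
have gmE : gm = - (v j0 - v i0).
  rewrite /gm /m /v /d natrB ?(ltnW ij) // intrD intrN; lra.
have gm0 : gm != 0.
  apply/negP => /eqP h.
  have dz : (d%:Z != 0)%R by rewrite /d; apply/negP => /eqP [] ; lia.
  have := ha m d%:Z dz; rewrite -pmulrn.
  by rewrite /gm in h; move: h => /eqP; rewrite subr_eq0 => /eqP ->; rewrite mulrC eqxx.
have [K [k0 hK]] : exists K : nat, exists k0 : int, lo < k0%:~R + K%:R * gm < hi.
  apply: step_real => //; rewrite gmE; rewrite -/e; apply/andP; case/andP: hc => h1 h2; split; lra.
exists (K * d)%N, (k0 + K%:Z * m)%R.
have -> : (k0 + K%:Z * m)%:~R - (K * d)%N%:R * a = k0%:~R + K%:R * gm.
  rewrite /gm intrD intrM -pmulrn natrM; lra.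
exact: hK.
Qed.


Lemma U2' t t' a x x' u : Defs.irrational a -> Mech t a x u -> Mech t' a x' u -> x < x' -> False.
Proof.
move=> ha H H' xx.
have [n [k /andP[h1 h2]]] := dens a ha x x' xx.
have /andP[h3 h4] := flr_weak _ _ _ (H n).
have /andP[h5 h6] := flr_weak _ _ _ (H' n).
have c1 : (cnt u n)%:R < k%:~R :> R by lra.
have c2 : k%:~R < (cnt u n)%:R + 1 :> R by lra.
have c1' : (((cnt u n)%:Z)%:~R : R) < k%:~R by rewrite -pmulrn.
have c2' : (k%:~R : R) < ((cnt u n)%:Z + 1)%:~R by rewrite intrD -pmulrn ?mulr1z.
move: c1' c2'; rewrite !ltr_int; lia.
Qed.

Lemma U2 t t' a x x' u : Defs.irrational a -> Mech t a x u -> Mech t' a x' u -> x = x'.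
Proof.
move=> ha H H'; case: (ltgtP x x') => // h.
- by case: (U2' t t' a x x' u ha H H' h).
- by case: (U2' t' t a x' x u ha H' H h).
Qed.

Definition kof (l : mletter) (b : R) : R :=
  match l with La | Lb => 1 / (1 + b) | _ => 1 / (2 - b) end.

Lemma kof_range l b : 0 < b < 1 -> 0 <= kof l b < 1.
Proof.
move=> /andP[b0 b1]; apply/andP; case: l => /=; split.
all: try (apply: divr_ge0; lra).
all: rewrite ltr_pdivrMr; lra.
Qed.

Lemma class_contract (P : mletter -> bool) (g : R -> R) :
  (forall l b z, P l -> 0 < b < 1 -> X l b z - g (A l b) = kof l b * (z - g b)) ->
  forall w a, all P w -> 0 < a < 1 -> (0 < size w)%N ->
  exists K, 0 <= K < 1 /\ forall x, Xw w a x - g (Aw w a) = K * (x - g a).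
Proof.
move=> hP; elim=> [|l w IH] a //= /andP[Pl Pw] ha _.
have hb := Aw_range w a ha.
have [w0|wn] := posnP (size w).
  move: w0 hb; case: w {IH Pw} => // hb.
  exists (kof l a); split; first exact: kof_range.
  by move=> x /=; apply: hP.
have [K [hK HK]] := IH a Pw ha wn.
exists (kof l (Aw w a) * K); split.
  have /andP[k0 k1] := kof_range l _ hb; case/andP: hK => K0 K1.
  apply/andP; split; first exact: mulr_ge0.
  apply: (le_lt_trans (y := K)); last done.
  by rewrite -[X in _ <= X]mul1r ler_wpM2r //; apply: ltW.
by move=> x; rewrite hP // HK mulrA.
Qed.


Lemma cls1 l b z : in_b_beta l -> 0 < b < 1 -> X l b z - (fun y => y) (A l b) = kof l b * (z - (fun y => y) b).
Proof.
case: l => //= _ /andP[b0 b1].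
all: have n1 : 1 + b != 0 by rewrite gt_eqF //; lra.
all: have n2 : 2 - b != 0 by rewrite gt_eqF //; lra.
all: by rewrite /kof; field. Qed.
Lemma cls2 l b z : in_b_alpha l -> 0 < b < 1 -> X l b z - (fun _ => 0) (A l b) = kof l b * (z - (fun _ => 0) b).
Proof.
case: l => //= _ /andP[b0 b1].
all: have n1 : 1 + b != 0 by rewrite gt_eqF //; lra.
all: have n2 : 2 - b != 0 by rewrite gt_eqF //; lra.
all: by rewrite /kof; field. Qed.
Lemma cls3 l b z : in_a_beta l -> 0 < b < 1 -> X l b z - (fun _ => 1) (A l b) = kof l b * (z - (fun _ => 1) b).
Proof.
case: l => //= _ /andP[b0 b1].
all: have n1 : 1 + b != 0 by rewrite gt_eqF //; lra.
all: have n2 : 2 - b != 0 by rewrite gt_eqF //; lra.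
all: by rewrite /kof; field. Qed.
Lemma cls4 l b z : in_a_alpha l -> 0 < b < 1 -> X l b z - (fun y => 1 - y) (A l b) = kof l b * (z - (fun y => 1 - y) b).
Proof.
case: l => //= _ /andP[b0 b1].
all: have n1 : 1 + b != 0 by rewrite gt_eqF //; lra.
all: have n2 : 2 - b != 0 by rewrite gt_eqF //; lra.
all: by rewrite /kof; field. Qed.


Lemma prim_nonempty w : primitive (phiw w) -> (0 < size w)%N.
Proof.
case: w => // [[k H]].
have E : forall s, mapw (phiw [::]) s = s by move=> s; rewrite /mapw flatten_seq1.
have := H false true.
have -> : iter k (mapw (phiw [::])) [:: false] = [:: false].
  by elim: k {H} => // k IH; rewrite iterS IH E.
by [].
Qed.

Lemma finish (l0 l1 rho : R) u w : sturmian l0 l1 rho u -> primitive (phiw w) ->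
  fixed_by (phiw w) u ->
  forall (P : mletter -> bool) g, (forall l b z, P l -> 0 < b < 1 -> X l b z - g (A l b) = kof l b * (z - g b)) ->
  all P w -> rho = g (l1 / (l0 + l1)) * (l0 + l1).
Proof.
move=> hst hprim hfix P g hP hw.
have [h0 [h1 [hirr _]]] := hst.
have L0 : 0 < l0 + l1 by lra.
have [t Hm] := sturm_Mech l0 l1 rho u hst.
set al := l1 / (l0 + l1) in Hm hirr *.
set x := rho / (l0 + l1) in Hm.
have ha : 0 < al < 1.
  apply/andP; split; first by apply: divr_gt0.
  by rewrite ltr_pdivrMr //; lra.
have HF : forall m, FMech t (Aw w al) (Xw w al x) (mapw (phiw w) (mkseq u m)).
  by move=> m; apply: FMech_w => //; apply: Mech_FMech.
have Hm' := fixed_Mech w t _ _ u hfix HF.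
have eA : Aw w al = al by apply: (U1 t t _ _ _ _ u Hm' Hm).
rewrite eA in Hm'.
have eX : Xw w al x = x by apply: (U2 t t al _ _ u hirr Hm' Hm).
have [K [/andP[K0 K1] HK]] := class_contract P g hP w al hw ha (prim_nonempty w hprim).
have := HK x; rewrite eX eA => e.
have e2 : (1 - K) * (x - g al) = 0 by rewrite mulrBl mul1r -e; lra.
move: e2 => /eqP; rewrite mulf_eq0 => /orP[|].
  by rewrite subr_eq0 => /eqP K1'; move: K1; rewrite -K1' ltxx.
rewrite subr_eq0 => /eqP ex.
by rewrite -ex /x divfK // gt_eqF.
Qed.

End S.

Theorem lemma21 (R : realType) (l0 l1 rho : R) (u : nat -> bool)
    (w : seq mletter) :
  sturmian l0 l1 rho u -> primitive (phiw w) -> fixed_by (phiw w) u ->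
  [/\ (all in_b_beta w -> rho = l1),
      (all in_b_alpha w -> rho = 0),
      (all in_a_beta w -> rho = l0 + l1)
    & (all in_a_alpha w -> rho = l0)].
Proof.
move=> hst hprim hfix.
have [h0 [h1 _]] := hst.
have n0 : l0 + l1 != 0 by rewrite gt_eqF //; lra.
split => hw.
- rewrite (finish R l0 l1 rho u w hst hprim hfix _ (fun y => y) (cls1 R) hw).
  by rewrite divfK.
- rewrite (finish R l0 l1 rho u w hst hprim hfix _ (fun _ => 0) (cls2 R) hw).
  by rewrite mul0r.
- rewrite (finish R l0 l1 rho u w hst hprim hfix _ (fun _ => 1) (cls3 R) hw).
  by rewrite mul1r.
- rewrite (finish R l0 l1 rho u w hst hprim hfix _ (fun y => 1 - y) (cls4 R) hw).
  by rewrite mulrBl mul1r divfK //; lra.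
Qed.
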